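(* Let $b_1 < b_2$ be real numbers and $h>0$, and let $\mathcal{B}\subset\mathbb{C}$ be the closed rectangle with vertices $b_1, b_2, \beta_1 = b_1 - \mathrm{i}h, \beta_2 = b_2 - \mathrm{i}h$ (so $\operatorname{Im}(b_j)=0$ and $\operatorname{Im}(\beta_j)=-h<0$). Fix $z\in\mathbb{C}$ and, for $p\in\mathbb{C}$, let $R_p(\lambda) = 1-(\lambda-z)p$. Then: (i) for every $p\in\mathbb{C}$, $\max_{\lambda\in\mathcal{B}}|R_p(\lambda)| = \max_{\lambda\in\{b_1,b_2,\beta_1,\beta_2\}}|R_p(\lambda)|$; consequently \[ \min_{p\in\mathbb{C}}\max_{\lambda\in\mathcal{B}}|R_p(\lambda)|=\min_{p\in\mathbb{C}}\max_{\lambda\in\{b_1, b_2, \beta_1, \beta_2\}}|R_p(\lambda)|. \] (ii) If moreover $\operatorname{Im}(z)\notin[-h, 0]$ and $z$ lies in the interior of the circumcircle of $\mathcal{B}$, define \[ (\alpha_1, \alpha_2) = \begin{cases} (b_1-z,\ b_2-z) & \text{if } \operatorname{Im}(z)>0,\\ (\beta_1-z,\ \beta_2-z) & \text{otherwise}.\end{cases} \] Then \[ \min_{p\in\mathbb{C}}\max_{\lambda\in\mathcal{B}}|R_p(\lambda)| = \frac{|\alpha_1 - \alpha_2|}{|\alpha_1|+|\alpha_2|}, \] and this minimum is attained at $p^\ast=\dfrac{|\alpha_1|/\alpha_1 + |\alpha_2|/\alpha_2}{|\alpha_1|+|\alpha_2|}$.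
   Context: This concerns the stationary Richardson iteration $y^{(m+1)} = y^{(m)} + p\,(f-(A-zI)y^{(m)})$ for a shifted system $(A-zI)y=f$ whose spectrum lies in $\mathcal{B}$; $R_p$ is its residual polynomial. *)

(* Defs.v *)
(* The complex plane is modelled by an arbitrary
   numClosedFieldType C (e.g. algC); real numbers are elements x with
   x \is Num.real. *)
From HB Require Import structures.
From mathcomp Require Import all_boot all_order all_algebra.
Set Implicit Arguments. Unset Strict Implicit. Unset Printing Implicit Defensive.
Import Order.TTheory GRing.Theory Num.Theory.
Local Open Scope ring_scope.

Section Defs.
Variable C : numClosedFieldType.

Definition Rp (z p l : C) : C := 1 - (l - z) * p.

Definition rect (b1 b2 h : C) : C -> bool :=
  fun l => (b1 <= 'Re l <= b2) && (- h <= 'Im l <= 0).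

Definition verts (b1 b2 h : C) : C -> bool :=
  fun l => l \in [:: b1; b2; b1 - 'i * h; b2 - 'i * h].

Definition is_max_on (A : C -> bool) (f : C -> C) (m : C) : Prop :=
  (exists2 l, A l & f l = m) /\ (forall l, A l -> f l <= m).

Definition is_minmax (A : C -> bool) (z v : C) : Prop :=
  (exists p, is_max_on A (fun l => `|Rp z p l|) v) /\
  (forall p m, is_max_on A (fun l => `|Rp z p l|) m -> v <= m).

End Defs.

(* Main.v *)
Require Import Defs.
From HB Require Import structures.
From mathcomp Require Import all_boot all_order all_algebra.
From mathcomp Require Import ring lra.
Set Implicit Arguments. Unset Strict Implicit. Unset Printing Implicit Defensive.
Import Order.TTheory GRing.Theory Num.Theory.
Local Open Scope ring_scope.

Lemma key_ineq (R : realFieldType) (K Pp y D h : R) :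
  0 < K -> 0 < y -> 0 < h -> (K + Pp) * (K - Pp) = y^+2 * D^+2 -> Pp + y * h < 0 ->
  h * (K + Pp) <= y * D^+2.
Proof.
move=> K0 y0 h0 e c.
have d0 : 0 < K - Pp - y * h by nra.
have yd : 0 <= y * D^+2 by nra.
have : h * (K + Pp) * (K - Pp) <= y * D^+2 * (K - Pp).
  have -> : h * (K + Pp) * (K - Pp) = y * D^+2 * (y * h) by rewrite -mulrA e; ring.
  by rewrite ler_wpM2l // ; lra.
by rewrite ler_pM2r //; nra.
Qed.

Lemma core_real (R : realFieldType) (a1 a2 Y h n1 n2 a tau : R) :
  a1 < a2 -> 0 < h -> 0 < n1 -> 0 < n2 -> n1^+2 = a1^+2+Y^+2 -> n2^+2 = a2^+2+Y^+2 -> Y != 0 ->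
  a1*a2 + Y^+2 + `|Y|*h < 0 -> (a = a1 \/ a = a2) ->
  tau = (if 0 < Y then -h else h) ->
  (n1*n2*(n1+n2) - a*(a1*n2 + a2*n1) + (tau - Y)*(Y*(n1+n2)))^+2
  + (a*(Y*(n1+n2)) + (tau - Y)*(a1*n2 + a2*n1))^+2 <= (a2-a1)^+2 * (n1*n2)^+2.
Proof.
move=> lt12 h0 n10 n20 e1 e2 Y0 circ ha htau.
set U := a1*n2 + a2*n1; set V := Y*(n1+n2); set T := n1*n2*(n1+n2).
set K := n1 * n2; set Pp := a1*a2 + Y^+2; set D := a2 - a1; set W := U^+2 + V^+2.
have K0 : 0 < K by rewrite /K mulr_gt0.
have f0 : (T - a*U - Y*V)^+2 + (a*V - Y*U)^+2 = D^+2 * K^+2.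
  case: ha => ->.
  - have -> : T - a1*U - Y*V = n1*a2*D + n2*(n1^+2 - (a1^+2 + Y^+2)) + n1*(n2^+2 - (a2^+2+Y^+2))
      by rewrite /T /U /V /D; ring.
    rewrite -e1 -e2 !subrr !mulr0 !addr0.
    have -> : a1*V - Y*U = - (Y*n1*D) by rewrite /V /U /D; ring.
    rewrite sqrrN.
    have -> : D^+2 * K^+2 = D^+2 * n1^+2 * n2^+2 by rewrite /K; ring.
    rewrite e2; ring.
  - have -> : T - a2*U - Y*V = - (n2*a1*D) + n2*(n1^+2 - (a1^+2 + Y^+2)) + n1*(n2^+2 - (a2^+2+Y^+2))
      by rewrite /T /U /V /D; ring.
    rewrite -e1 -e2 !subrr !mulr0 !addr0 sqrrN.
    have -> : a2*V - Y*U = Y*n2*D by rewrite /V /U /D; ring.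
    have -> : D^+2 * K^+2 = D^+2 * n1^+2 * n2^+2 by rewrite /K; ring.
    rewrite e1; ring.
have eW : W = 2 * K * (K + Pp).
  have -> : W = 2 * K * (K + Pp) + n2^+2 * ((a1^+2+Y^+2) - n1^+2) + n1^+2 * ((a2^+2+Y^+2) - n2^+2)
    by rewrite /W /U /V /K /Pp; ring.
  by rewrite -e1 -e2 !subrr !mulr0 !addr0.
have eS : (n1 + n2)^+2 = a1^+2 + a2^+2 + 2 * Y^+2 + 2 * K.
  have -> : (n1 + n2)^+2 = n1^+2 + n2^+2 + 2 * K by rewrite /K; ring.
  by rewrite e1 e2; ring.
have expand : (T - a*U + (tau - Y)*V)^+2 + (a*V + (tau - Y)*U)^+2
   = D^+2 * K^+2 + tau * (2 * K * (Y * D^+2 + tau * (K + Pp))).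
  rewrite -f0.
  have -> : (T - a*U + (tau - Y)*V)^+2 + (a*V + (tau - Y)*U)^+2
     = (T - a*U - Y*V)^+2 + (a*V - Y*U)^+2 + tau * (2 * (T*V - Y*W) + tau * W)
     by rewrite /W; ring.
  congr (_ + _ * _).
  have -> : T * V = Y * K * (n1 + n2)^+2 by rewrite /T /V /K; ring.
  rewrite eS eW /D /Pp; ring.
rewrite expand gerDl.
have eK : (K + Pp) * (K - Pp) = `|Y|^+2 * D^+2.
  have -> : (K + Pp) * (K - Pp) = n1^+2 * n2^+2 - Pp^+2 by rewrite /K; ring.
  rewrite e1 e2 real_normK ?num_real // /Pp /D; ring.
have y0 : 0 < `|Y| by rewrite normr_gt0.
have key := key_ineq K0 y0 h0 eK circ.
have hK : 0 < h * K by rewrite mulr_gt0.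
rewrite htau; case: ifP => Yp.
- move: key; rewrite gtr0_norm // => key. nra.
- have Yn : Y < 0 by rewrite lt_neqAle Y0 /=; move/negbT: Yp; rewrite -leNgt.
  move: key; rewrite ltr0_norm // => key. nra.
Qed.

Section RS.
Variable C : numClosedFieldType.
Definition RS := {x : C | x \is Num.real}.
HB.instance Definition _ := [isSub for (@proj1_sig C _) : RS -> C].
HB.instance Definition _ := [Choice of RS by <:].
HB.instance Definition _ := [SubChoice_isSubComUnitRing of RS by <:].
HB.instance Definition _ := [SubComUnitRing_isSubIntegralDomain of RS by <:].
HB.instance Definition _ := [SubIntegralDomain_isSubField of RS by <:].
Definition RSle (x y : RS) := val x <= val y.
Definition RSlt (x y : RS) := val x < val y.
Lemma RSnorm_real (x : RS) : `|val x| \is Num.real. Proof. exact: normr_real. Qed.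
Definition RSnorm (x : RS) : RS := exist _ `|val x| (RSnorm_real x).
Lemma RSvalM (x y : RS) : val (x * y) = val x * val y. Proof. exact: rmorphM. Qed.
Lemma RSvalD (x y : RS) : val (x + y) = val x + val y. Proof. exact: rmorphD. Qed.
Lemma RSvalB (x y : RS) : val (x - y) = val x - val y. Proof. exact: rmorphB. Qed.
Lemma RSvalN (x : RS) : val (- x) = - val x. Proof. exact: rmorphN. Qed.
Lemma RSval0 : val (0 : RS) = 0. Proof. exact: rmorph0. Qed.
Lemma RSval1 : val (1 : RS) = 1. Proof. exact: rmorph1. Qed.
Lemma RS_le0_add x y : RSle 0 x -> RSle 0 y -> RSle 0 (x + y).
Proof. rewrite /RSle RSval0 RSvalD. exact: addr_ge0. Qed.
Lemma RS_le0_mul x y : RSle 0 x -> RSle 0 y -> RSle 0 (x * y).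
Proof. rewrite /RSle RSval0 RSvalM. exact: mulr_ge0. Qed.
Lemma RS_le0_anti x : RSle 0 x -> RSle x 0 -> x = 0.
Proof. rewrite /RSle RSval0 => a b; apply: val_inj; rewrite RSval0; apply/eqP; by rewrite eq_le a b. Qed.
Lemma RS_sub_ge0 x y : RSle 0 (y - x) = RSle x y.
Proof. by rewrite /RSle RSval0 RSvalB subr_ge0. Qed.
Lemma RS_le0_total x : RSle 0 x || RSle x 0.
Proof. rewrite /RSle RSval0; case: x => x /= hx; exact: hx. Qed.
Lemma RS_normN x : RSnorm (- x) = RSnorm x.
Proof. apply: val_inj; exact: normrN. Qed.
Lemma RS_ge0_norm x : RSle 0 x -> RSnorm x = x.
Proof. rewrite /RSle RSval0 => hx; apply: val_inj => /=; exact: ger0_norm. Qed.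
Lemma RS_lt_def x y : RSlt x y = (y != x) && RSle x y.
Proof. by rewrite /RSlt /RSle lt_def (inj_eq val_inj). Qed.
HB.instance Definition _ := Num.IntegralDomain_isLeReal.Build RS
  RS_le0_add RS_le0_mul RS_le0_anti RS_sub_ge0 RS_le0_total RS_normN RS_ge0_norm RS_lt_def.
Lemma RSle_val (a b : RS) : (a <= b) = (val a <= val b). Proof. by []. Qed.
Lemma RSlt_val (a b : RS) : (a < b) = (val a < val b). Proof. by []. Qed.
End RS.

Lemma core_C (C : numClosedFieldType) (a1 a2 Y h n1 n2 a tau : C) :
  a1 \is Num.real -> a2 \is Num.real -> Y \is Num.real -> h \is Num.real ->
  n1 \is Num.real -> n2 \is Num.real -> a \is Num.real -> tau \is Num.real ->
  a1 < a2 -> 0 < h -> 0 < n1 -> 0 < n2 -> n1^+2 = a1^+2+Y^+2 -> n2^+2 = a2^+2+Y^+2 -> Y != 0 ->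
  a1*a2 + Y^+2 + `|Y|*h < 0 -> (a = a1 \/ a = a2) ->
  tau = (if 0 < Y then -h else h) ->
  (n1*n2*(n1+n2) - a*(a1*n2 + a2*n1) + (tau - Y)*(Y*(n1+n2)))^+2
  + (a*(Y*(n1+n2)) + (tau - Y)*(a1*n2 + a2*n1))^+2 <= (a2-a1)^+2 * (n1*n2)^+2.
Proof.
move=> ra1 ra2 rY rh rn1 rn2 ra rtau lt12 h0 n10 n20 e1 e2 Y0 circ ha htau.
pose A1 : RS C := exist _ a1 ra1. pose A2 : RS C := exist _ a2 ra2.
pose YY : RS C := exist _ Y rY. pose H : RS C := exist _ h rh.
pose N1 : RS C := exist _ n1 rn1. pose N2 : RS C := exist _ n2 rn2.
pose AA : RS C := exist _ a ra. pose TT : RS C := exist _ tau rtau.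
have := @core_real (RS C) A1 A2 YY H N1 N2 AA TT.
apply.
- exact: lt12.
- exact: h0.
- exact: n10.
- exact: n20.
- by apply: val_inj.
- by apply: val_inj.
- by rewrite -(inj_eq val_inj).
- exact: circ.
- by case: ha => e; [left|right]; apply: val_inj; exact: e.
- apply: val_inj => /=. rewrite htau. have -> : (0 < YY) = (0 < Y) by []. by case: ifP.
Qed.

Lemma normC2_rect (C : numClosedFieldType) (x y : C) : x \is Num.real -> y \is Num.real ->
  `|x + 'i * y| ^+ 2 = x ^+ 2 + y ^+ 2.
Proof. by move=> rx ry; rewrite normC2_Re_Im Re_rect // Im_rect. Qed.

Lemma mulC_rect (C : numClosedFieldType) (a b c d : C) :
  (a + 'i * b) * (c + 'i * d) = (a * c - b * d) + 'i * (a * d + b * c).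
Proof.
have -> : (a + 'i * b) * (c + 'i * d) = (a * c - b * d) + 'i * (a * d + b * c)
   + ('i ^+ 2 + 1) * (b * d) by ring.
by rewrite sqrCi addNr mul0r addr0.
Qed.

Lemma core2 (C : numClosedFieldType) (b1 b2 h w A1 A2 : C) :
  b1 \is Num.real -> b2 \is Num.real -> h \is Num.real -> b1 < b2 -> 0 < h ->
  'Im w != 0 ->
  (b1 - 'Re w) * (b2 - 'Re w) + 'Im w ^+ 2 + `|'Im w| * h < 0 ->
  A1 = b1 - w -> A2 = b2 - w ->
  let v := `|A1 - A2| / (`|A1| + `|A2|) in
  let p := (`|A1| / A1 + `|A2| / A2) / (`|A1| + `|A2|) in
  let tau := if 0 < 'Im w then - h else h in
  [/\ `|1 - A1 * p| = v, `|1 - A2 * p| = v,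
      `|1 - (A1 + 'i * tau) * p| <= v & `|1 - (A2 + 'i * tau) * p| <= v].
Proof.
move=> rb1 rb2 rh lt12 h0 Y0 circ hA1 hA2 v p tau.
set x := 'Re w; set Y := 'Im w.
have rx : x \is Num.real by exact: Creal_Re.
have rY : Y \is Num.real by exact: Creal_Im.
set a1 := b1 - x; set a2 := b2 - x.
have ra1 : a1 \is Num.real by rewrite rpredB.
have ra2 : a2 \is Num.real by rewrite rpredB.
have hw : w = x + 'i * Y by exact: Crect.
have eA1 : A1 = a1 + 'i * (- Y) by rewrite hA1 hw /a1; ring.
have eA2 : A2 = a2 + 'i * (- Y) by rewrite hA2 hw /a2; ring.
set n1 := `|A1|; set n2 := `|A2|.
have e1 : n1 ^+ 2 = a1 ^+ 2 + Y ^+ 2 by rewrite /n1 eA1 normC2_rect ?rpredN // sqrrN.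
have e2 : n2 ^+ 2 = a2 ^+ 2 + Y ^+ 2 by rewrite /n2 eA2 normC2_rect ?rpredN // sqrrN.
have Y2 : 0 < Y ^+ 2 by rewrite real_exprn_even_gt0.
have pos1 : 0 < a1 ^+ 2 + Y ^+ 2 by apply: ltr_wpDl => //; rewrite -realEsqr.
have pos2 : 0 < a2 ^+ 2 + Y ^+ 2 by apply: ltr_wpDl => //; rewrite -realEsqr.
have A10 : A1 != 0.
  apply/negP => /eqP A0; move: e1; rewrite /n1 A0 normr0 expr0n /= => e.
  by move: pos1; rewrite -e ltxx.
have A20 : A2 != 0.
  apply/negP => /eqP A0; move: e2; rewrite /n2 A0 normr0 expr0n /= => e.
  by move: pos2; rewrite -e ltxx.
have n10 : 0 < n1 by rewrite normr_gt0.
have n20 : 0 < n2 by rewrite normr_gt0.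
have S0 : 0 < n1 + n2 by rewrite addr_gt0.
have n1r : n1 \is Num.real by rewrite gtr0_real.
have n2r : n2 \is Num.real by rewrite gtr0_real.
have n1n : n1 != 0 by rewrite gt_eqF.
have n2n : n2 != 0 by rewrite gt_eqF.
have Sn : n1 + n2 != 0 by rewrite gt_eqF.
have D0 : `|A1 - A2| = a2 - a1.
  have -> : A1 - A2 = a1 - a2 by rewrite eA1 eA2; ring.
  rewrite distrC ger0_norm // subr_ge0 /a1 /a2 lerD2r; exact: ltW.
set U := a1 * n2 + a2 * n1; set V := Y * (n1 + n2); set T := n1 * n2 * (n1 + n2).
have T0 : 0 < T by rewrite /T !mulr_gt0.
have h1 : n1 / A1 = (a1 + 'i * Y) / n1.
  apply/eqP; rewrite eqr_div // eA1 mulC_rect; apply/eqP.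
  rewrite -expr2 e1.
  have -> : a1 * - Y + Y * a1 = 0 by ring.
  rewrite mulr0 addr0; ring.
have h2 : n2 / A2 = (a2 + 'i * Y) / n2.
  apply/eqP; rewrite eqr_div // eA2 mulC_rect; apply/eqP.
  rewrite -expr2 e2.
  have -> : a2 * - Y + Y * a2 = 0 by ring.
  rewrite mulr0 addr0; ring.
have hp : p * T = U + 'i * V.
  rewrite /p -/n1 -/n2 h1 h2 /T /U /V; field; by rewrite ?n1n ?n2n ?Sn.
have rtau : tau \is Num.real by rewrite /tau; case: ifP; rewrite ?rpredN.
have rU : U \is Num.real by rewrite /U rpredD ?rpredM.
have rV : V \is Num.real by rewrite /V rpredM ?rpredD.
have rT : T \is Num.real by rewrite gtr0_real.
have circ' : a1 * a2 + Y ^+ 2 + `|Y| * h < 0 by [].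
have vT : v * T = (a2 - a1) * (n1 * n2).
  rewrite /v -/n1 -/n2 D0 /T; field; by rewrite ?Sn.
have gen : forall (A a : C), A = a + 'i * (- Y) -> (a = a1 \/ a = a2) -> a \is Num.real ->
    `|1 - (A + 'i * tau) * p| <= v.
  move=> A a eA ha ra.
  rewrite -(ler_pM2r T0) -(ger0_norm (ltW T0)) -normrM (ger0_norm (ltW T0)) vT.
  have -> : (1 - (A + 'i * tau) * p) * T = T - (a + 'i * (tau - Y)) * (p * T)
    by rewrite eA; ring.
  rewrite hp mulC_rect.
  have -> : T - ((a * U - (tau - Y) * V) + 'i * (a * V + (tau - Y) * U))
     = (T - (a * U - (tau - Y) * V)) + 'i * (- (a * V + (tau - Y) * U)) by ring.
  have rq1 : T - (a * U - (tau - Y) * V) \is Num.real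
    by apply: rpredB => //; apply: rpredB; apply: rpredM => //; apply: rpredB.
  have rq2 : - (a * V + (tau - Y) * U) \is Num.real
    by rewrite rpredN; apply: rpredD; apply: rpredM => //; apply: rpredB.
  have rhs0 : 0 <= (a2 - a1) * (n1 * n2).
    by rewrite mulr_ge0 ?mulr_ge0 ?ltW // subr_gt0 /a1 /a2 ltrD2r.
  rewrite -(ler_pXn2r (n := 2)) // ?nnegrE ?normr_ge0 // normC2_rect // sqrrN exprMn.
  have lt12' : a1 < a2 by rewrite /a1 /a2 ltrD2r.
  have key := core_C ra1 ra2 rY rh n1r n2r ra rtau lt12' h0 n10 n20 e1 e2 Y0 circ' ha (erefl _).
  apply: le_trans _ key; rewrite le_eqVlt; apply/orP; left; apply/eqP.
  rewrite /T /U /V; ring.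
split.
- have -> : 1 - A1 * p = n2 * (A2 - A1) / (A2 * (n1 + n2)).
    rewrite /p -/n1 -/n2; field; by rewrite ?A10 ?A20 ?Sn.
  rewrite normrM normfV !normrM (ger0_norm (ltW n20)) (ger0_norm (ltW S0)) -/n2.
  rewrite /v -/n1 -/n2 distrC; field; by rewrite ?n2n ?Sn.
- have -> : 1 - A2 * p = n1 * (A1 - A2) / (A1 * (n1 + n2)).
    rewrite /p -/n1 -/n2; field; by rewrite ?A10 ?A20 ?Sn.
  rewrite normrM normfV !normrM (ger0_norm (ltW n10)) (ger0_norm (ltW S0)) -/n1.
  rewrite /v -/n1 -/n2; field; by rewrite ?n1n ?Sn.
- apply: (gen _ a1) => //; by left.
- apply: (gen _ a2) => //; by right.
Qed.

Lemma reim_rect (C : numClosedFieldType) (x y : C) : x \is Num.real -> y \is Num.real ->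
  'Re (x + 'i * y) = x /\ 'Im (x + 'i * y) = y.
Proof. by move=> rx ry; rewrite Re_rect // Im_rect. Qed.

Lemma comb4 (C : numClosedFieldType) (w1 w2 w3 w4 r1 r2 r3 r4 m : C) :
  0 <= w1 -> 0 <= w2 -> 0 <= w3 -> 0 <= w4 -> w1 + w2 + w3 + w4 = 1 ->
  `|r1| <= m -> `|r2| <= m -> `|r3| <= m -> `|r4| <= m ->
  `|w1 * r1 + w2 * r2 + w3 * r3 + w4 * r4| <= m.
Proof.
move=> p1 p2 p3 p4 s h1 h2 h3 h4.
apply: le_trans (ler_normD _ _) _.
apply: le_trans (lerD (ler_normD _ _) (lexx _)) _.
apply: le_trans (lerD (lerD (ler_normD _ _) (lexx _)) (lexx _)) _.
rewrite !normrM (ger0_norm p1) (ger0_norm p2) (ger0_norm p3) (ger0_norm p4).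
have -> : m = w1 * m + w2 * m + w3 * m + w4 * m by rewrite -!mulrDl s mul1r.
by apply: lerD; [apply: lerD; [apply: lerD|]|]; apply: ler_wpM2l.
Qed.

Lemma rect_bound (C : numClosedFieldType) (b1 b2 h z p m : C) :
  b1 \is Num.real -> b2 \is Num.real -> h \is Num.real -> b1 < b2 -> 0 < h ->
  (forall l, verts b1 b2 h l -> `|Rp z p l| <= m) ->
  forall l, rect b1 b2 h l -> `|Rp z p l| <= m.
Proof.
move=> rb1 rb2 rh lt12 h0 hv l /andP [/andP [L1 L2] /andP [I1 I2]].
set L := 'Re l in L1 L2; set I := 'Im l in I1 I2.
have hl : l = L + 'i * I by exact: Crect.
set s := (L - b1) / (b2 - b1); set u := - I / h.
have d0 : 0 < b2 - b1 by rewrite subr_gt0.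
have dn : b2 - b1 != 0 by rewrite gt_eqF.
have hn : h != 0 by rewrite gt_eqF.
have s0 : 0 <= s by rewrite divr_ge0 ?subr_ge0 // ltW.
have s1 : 0 <= 1 - s.
  by rewrite subr_ge0 /s ler_pdivrMr // mul1r lerD2r.
have u0 : 0 <= u by rewrite divr_ge0 ?oppr_ge0 // ltW.
have u1 : 0 <= 1 - u.
  by rewrite subr_ge0 /u ler_pdivrMr // mul1r lerNl.
have -> : Rp z p l = ((1 - s) * (1 - u)) * Rp z p b1 + (s * (1 - u)) * Rp z p b2
   + ((1 - s) * u) * Rp z p (b1 - 'i * h) + (s * u) * Rp z p (b2 - 'i * h).
  rewrite /Rp hl /s /u; field; by rewrite ?dn ?hn.
apply: comb4; try exact: mulr_ge0; first ring.
all: apply: hv; by rewrite /verts !inE eqxx ?orbT.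
Qed.

Lemma verts_rect (C : numClosedFieldType) (b1 b2 h l : C) :
  b1 \is Num.real -> b2 \is Num.real -> h \is Num.real -> b1 < b2 -> 0 < h ->
  verts b1 b2 h l -> rect b1 b2 h l.
Proof.
move=> rb1 rb2 rh lt12 h0; rewrite /verts !inE => /or4P [] /eqP hl; rewrite /rect hl.
- by rewrite (Creal_ReP _ rb1) (Creal_ImP _ rb1) !lexx (ltW lt12) oppr_le0 (ltW h0).
- by rewrite (Creal_ReP _ rb2) (Creal_ImP _ rb2) !lexx (ltW lt12) oppr_le0 (ltW h0).
- have -> : b1 - 'i * h = b1 + 'i * - h by rewrite mulrN.
  have [-> ->] : 'Re (b1 + 'i * - h) = b1 /\ 'Im (b1 + 'i * - h) = - h
    by apply: reim_rect; rewrite ?rpredN.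
  by rewrite !lexx (ltW lt12) oppr_le0 (ltW h0).
- have -> : b2 - 'i * h = b2 + 'i * - h by rewrite mulrN.
  have [-> ->] : 'Re (b2 + 'i * - h) = b2 /\ 'Im (b2 + 'i * - h) = - h
    by apply: reim_rect; rewrite ?rpredN.
  by rewrite !lexx (ltW lt12) oppr_le0 (ltW h0).
Qed.

Lemma argmax (C : numClosedFieldType) (f : C -> C) (s : seq C) :
  (forall x, 0 <= f x) -> s != [::] ->
  exists2 k, k \in s & forall j, j \in s -> f j <= f k.
Proof.
move=> f0; elim: s => [//|x s IH] _.
case: s IH => [|y s] IH.
  by exists x => [|j]; rewrite ?inE ?eqxx // => /eqP ->.
have [k kin kmax] := IH isT.
have rx : f x \is Num.real by rewrite ger0_real.
have rk : f k \is Num.real by rewrite ger0_real.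
case: (boolP (f x <= f k)) => hxk.
- exists k; first by rewrite inE kin orbT.
  move=> j; rewrite inE => /orP [/eqP -> //|]; exact: kmax.
- have hkx : f k <= f x by apply: ltW; rewrite real_ltNge.
  exists x; first by rewrite inE eqxx.
  move=> j; rewrite inE => /orP [/eqP -> //|/kmax jk]; exact: le_trans jk hkx.
Qed.

Lemma lower (C : numClosedFieldType) (A1 A2 p m : C) : A1 != 0 ->
  `|1 - A1 * p| <= m -> `|1 - A2 * p| <= m -> `|A1 - A2| / (`|A1| + `|A2|) <= m.
Proof.
move=> A10 h1 h2.
have S0 : 0 < `|A1| + `|A2| by apply: ltr_wpDr; rewrite ?normr_ge0 ?normr_gt0.
rewrite ler_pdivrMr //.
have -> : A1 - A2 = A1 * (1 - A2 * p) - A2 * (1 - A1 * p) by ring.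
apply: le_trans (ler_normB _ _) _.
rewrite !normrM mulrDr [m * `|A1|]mulrC [m * `|A2|]mulrC.
by apply: lerD; apply: ler_wpM2l; rewrite ?normr_ge0.
Qed.

Unset Implicit Arguments. Set Strict Implicit. Set Printing Implicit Defensive.

Theorem theorem4p1 (C : numClosedFieldType) (b1 b2 h z : C) :
  b1 \is Num.real -> b2 \is Num.real -> h \is Num.real ->
  b1 < b2 -> 0 < h ->
  (* (i) *)
  ((forall p m, is_max_on (rect b1 b2 h) (fun l => `|Rp z p l|) m <->
                is_max_on (verts b1 b2 h) (fun l => `|Rp z p l|) m) /\
   (forall v, is_minmax (rect b1 b2 h) z v <-> is_minmax (verts b1 b2 h) z v)) /\
  (* (ii) *)
  (~~ (- h <= 'Im z <= 0) ->
   `|z - ((b1 + b2) / 2%:R - 'i * h / 2%:R)| < `|b1 - ((b1 + b2) / 2%:R - 'i * h / 2%:R)| ->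
   let a1 := if 0 < 'Im z then b1 - z else b1 - 'i * h - z in
   let a2 := if 0 < 'Im z then b2 - z else b2 - 'i * h - z in
   let v := `|a1 - a2| / (`|a1| + `|a2|) in
   let pstar := (`|a1| / a1 + `|a2| / a2) / (`|a1| + `|a2|) in
   is_minmax (rect b1 b2 h) z v /\
   is_max_on (rect b1 b2 h) (fun l => `|Rp z pstar l|) v).
Proof.
move=> rb1 rb2 rh lt12 h0.
have vr := @verts_rect C b1 b2 h _ rb1 rb2 rh lt12 h0.
have rbound := @rect_bound C b1 b2 h z _ _ rb1 rb2 rh lt12 h0.
have iff1 : forall p m, is_max_on (rect b1 b2 h) (fun l => `|Rp z p l|) m <->
                is_max_on (verts b1 b2 h) (fun l => `|Rp z p l|) m.
  move=> p m.
  have [k kin kmax] := @argmax C (fun l => `|Rp z p l|) [:: b1; b2; b1 - 'i * h; b2 - 'i * h]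
     (fun x => normr_ge0 _) isT.
  split.
  - case=> [[l0 l0r fl0] bnd].
    have fkm : `|Rp z p k| = m.
      apply/eqP; rewrite eq_le; apply/andP; split; first exact: bnd (vr _ kin).
      rewrite -fl0; apply: rbound => // l lv; exact: kmax.
    split; first by exists k.
    move=> l lv; apply: bnd; exact: vr.
  - case=> [[l0 l0v fl0] bnd].
    split; first by exists l0 => //; exact: vr.
    exact: rbound.
split.
  split; first exact: iff1.
  move=> v; split; case=> [[p hp] hall]; split.
  - by exists p; apply/iff1.
  - by move=> p' m /iff1; exact: hall.
  - by exists p; apply/iff1.
  - by move=> p' m /iff1; exact: hall.
move=> Hz circ.
set x := 'Re z; set y := 'Im z.
have rx : x \is Num.real by exact: Creal_Re.
have ry : y \is Num.real by exact: Creal_Im.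
have hz : z = x + 'i * y by exact: Crect.
have two0 : (2%:R : C) != 0 by rewrite pnatr_eq0.
have circ2 : (b1 - x) * (b2 - x) + y ^+ 2 + y * h < 0.
  set mm := (b1 + b2) / 2%:R.
  have rmm : mm \is Num.real by rewrite rpredM ?rpredD ?rpredV ?rpred_nat.
  have rh2 : h / 2%:R \is Num.real by rewrite rpredM ?rpredV ?rpred_nat.
  have e1 : z - (mm - 'i * h / 2%:R) = (x - mm) + 'i * (y + h / 2%:R)
    by rewrite hz; ring.
  have e2 : b1 - (mm - 'i * h / 2%:R) = (b1 - mm) + 'i * (h / 2%:R) by ring.
  move: circ; rewrite e1 e2 -(ltr_pXn2r (n := 2)) ?nnegrE ?normr_ge0 //.
  rewrite !normC2_rect ?rpredD ?rpredN ?rpredB //.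
  rewrite -subr_lt0.
  have -> : (x - mm) ^+ 2 + (y + h / 2%:R) ^+ 2 - ((b1 - mm) ^+ 2 + (h / 2%:R) ^+ 2)
     = (b1 - x) * (b2 - x) + y ^+ 2 + y * h by rewrite /mm; field.
  done.
have [ypos|yle] := boolP (0 < y).
- move=> a1 a2 v pstar; rewrite /v /pstar /a1 /a2.
  have Y0 : 'Im z != 0 by rewrite gt_eqF.
  have circ3 : (b1 - 'Re z) * (b2 - 'Re z) + 'Im z ^+ 2 + `|'Im z| * h < 0
    by rewrite gtr0_norm.
  have [eq1 eq2 le1 le2] := @core2 C b1 b2 h z (b1 - z) (b2 - z) rb1 rb2 rh lt12 h0 Y0 circ3
    (erefl _) (erefl _).
  move: le1 le2; rewrite -/y ypos => le1 le2.
  set p := (_ / _) in eq1 eq2 le1 le2 *.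
  have A10 : b1 - z != 0.
    rewrite subr_eq0; apply/eqP => e; move: Y0; rewrite -e (Creal_ImP _ rb1) eqxx //.
  have mo : is_max_on (rect b1 b2 h) (fun l => `|Rp z p l|) (`|b1 - z - (b2 - z)| / (`|b1 - z| + `|b2 - z|)).
    split; first by exists b1; [apply: vr; rewrite /verts !inE eqxx | exact: eq1].
    apply: rbound => l; rewrite /verts !inE => /or4P [] /eqP ->; rewrite /Rp.
    + by rewrite eq1.
    + by rewrite eq2.
    + by have -> : b1 - 'i * h - z = b1 - z + 'i * - h by ring.
    + by have -> : b2 - 'i * h - z = b2 - z + 'i * - h by ring.
  split => //; split; first by exists p.
  move=> p' m [_ bnd].
  apply: lower => //.
  + apply: (bnd b1); apply: vr; by rewrite /verts !inE eqxx ?orbT.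
  + apply: (bnd b2); apply: vr; by rewrite /verts !inE eqxx ?orbT.
- move=> a1 a2 v pstar; rewrite /v /pstar /a1 /a2.
  have yh : y < - h.
    have y0 : y <= 0 by rewrite real_leNgt ?rpred0.
    by move: Hz; rewrite y0 andbT -real_ltNge ?rpredN.
  set w := z + 'i * h.
  have hw : w = x + 'i * (y + h) by rewrite /w hz; ring.
  have [Rw Iw] : 'Re w = x /\ 'Im w = y + h by rewrite hw; apply: reim_rect; rewrite ?rpredD.
  have Iwn : 'Im w < 0 by rewrite Iw -ltrBrDr sub0r.
  have Y0 : 'Im w != 0 by rewrite lt_eqF.
  have circ3 : (b1 - 'Re w) * (b2 - 'Re w) + 'Im w ^+ 2 + `|'Im w| * h < 0.
    rewrite ltr0_norm // Rw Iw.
    have -> : (b1 - x) * (b2 - x) + (y + h) ^+ 2 + - (y + h) * h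
       = (b1 - x) * (b2 - x) + y ^+ 2 + y * h by ring.
    done.
  have eA1 : b1 - 'i * h - z = b1 - w by rewrite /w; ring.
  have eA2 : b2 - 'i * h - z = b2 - w by rewrite /w; ring.
  have [eq1 eq2 le1 le2] := @core2 C b1 b2 h w (b1 - 'i * h - z) (b2 - 'i * h - z)
     rb1 rb2 rh lt12 h0 Y0 circ3 eA1 eA2.
  move: le1 le2; rewrite (lt_gtF Iwn) => le1 le2.
  set p := (_ / _) in eq1 eq2 le1 le2 *.
  have A10 : b1 - 'i * h - z != 0.
    apply/negP => /eqP e; move: Y0.
    have : w = b1 by apply/eqP; rewrite eq_sym -subr_eq0 -eA1 e.
    by move=> ->; rewrite (Creal_ImP _ rb1) eqxx.
  have mo : is_max_on (rect b1 b2 h) (fun l => `|Rp z p l|)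
     (`|b1 - 'i * h - z - (b2 - 'i * h - z)| / (`|b1 - 'i * h - z| + `|b2 - 'i * h - z|)).
    split.
      by exists (b1 - 'i * h); [apply: vr; rewrite /verts !inE eqxx !orbT | exact: eq1].
    apply: rbound => l; rewrite /verts !inE => /or4P [] /eqP ->; rewrite /Rp.
    + by have -> : b1 - z = b1 - 'i * h - z + 'i * h by ring.
    + by have -> : b2 - z = b2 - 'i * h - z + 'i * h by ring.
    + by rewrite eq1.
    + by rewrite eq2.
  split => //; split; first by exists p.
  move=> p' m [_ bnd].
  apply: lower => //.
  + apply: (bnd (b1 - 'i * h)); apply: vr; by rewrite /verts !inE eqxx ?orbT.
  + apply: (bnd (b2 - 'i * h)); apply: vr; by rewrite /verts !inE eqxx ?orbT.
Qed.
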